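(* Let $m,n$ be positive integers and $(A,\boldsymbol{\gamma})\in[0,1)^{m\times n}\times[0,1)^m$. If $\langle A\boldsymbol{q}-\boldsymbol{\gamma}\rangle>0$ for every $\boldsymbol{q}\in\mathbb{Z}^n\setminus\{\boldsymbol{0}\}$, then $(A,\boldsymbol{\gamma})\in\Omega(m,n)$ if and only if $S_1(A,\boldsymbol{\gamma})<+\infty$.
   Context: $[0,1)^{m\times n}$ is the set of real $m\times n$ matrices with entries in $[0,1)$. For $\boldsymbol{x}\in\mathbb{R}^n$, $\|\boldsymbol{x}\|=\max_i|x_i|$; for $\boldsymbol{y}\in\mathbb{R}^m$, $\langle\boldsymbol{y}\rangle=\min_{\boldsymbol{p}\in\mathbb{Z}^m}\|\boldsymbol{y}-\boldsymbol{p}\|$. For $\psi:\mathbb{N}\to[0,\infty)$, $W_{m,n}(\psi)$ is the set of pairs $(A,\boldsymbol{\gamma})$ such that $\langle A\boldsymbol{q}-\boldsymbol{\gamma}\rangle<\psi(\|\boldsymbol{q}\|)$ for infinitely many $\boldsymbol{q}\in\mathbb{Z}^n$. ''Decreasing'' means non-increasing. $\mathcal{D}$ is the set of decreasing $\psi:\mathbb{N}\to[0,\infty)$ with $\sum_{q\ge1}q^{n-1}\psi(q)^m=\infty$; $\Omega(m,n)=\bigcap_{\psi\in\mathcal{D}}W_{m,n}(\psi)$. $S_1(A,\boldsymbol{\gamma})=\sum_{t=1}^\infty t^{n-1}\min_{\boldsymbol{q}\in\mathbb{Z}^n,\ 1\le\|\boldsymbol{q}\|\le t}\langle A\boldsymbol{q}-\boldsymbol{\gamma}\rangle^m$.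 *)

(* Defs.v *)
From HB Require Import structures.
From mathcomp Require Import all_boot all_order all_algebra.
From mathcomp Require Import all_classical all_reals all_analysis.
Set Implicit Arguments. Unset Strict Implicit. Unset Printing Implicit Defensive.
Import Order.TTheory GRing.Theory Num.Theory.
Local Open Scope classical_set_scope.
Local Open Scope ring_scope.

Section Defs.
Variable R : realType.

Definition supnormZ (n : nat) (q : 'cV[int]_n) : nat := (\max_(i < n) `|q i ord0|%N)%N.

Definition distZm (m : nat) (y : 'cV[R]_m) : R :=
  inf [set \big[Num.max/0]_(i < m) `|y i ord0 - (p i ord0)%:~R| | p in [set: 'cV[int]_m]].

Definition Aqg (m n : nat) (A : 'M[R]_(m, n)) (g : 'cV[R]_m) (q : 'cV[int]_n) : 'cV[R]_m :=
  A *m map_mx (fun z : int => z%:~R) q - g.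

Definition W (m n : nat) (psi : nat -> R) : set ('M[R]_(m, n) * 'cV[R]_m) :=
  [set Ag : 'M[R]_(m, n) * 'cV[R]_m | infinite_set [set q : 'cV[int]_n | distZm (Aqg Ag.1 Ag.2 q) < psi (supnormZ q)]].

(* the class D: decreasing psi : N -> [0,oo) with sum q^(n-1) psi(q)^m = oo
   (N = {1,2,...}; psi 0 is irrelevant and only required to be >= 0) *)
Definition inD (m n : nat) (psi : nat -> R) : Prop :=
  (forall t, 0 <= psi t) /\
  (forall a b : nat, (1 <= a)%N -> (a <= b)%N -> psi b <= psi a) /\
  (\sum_(1 <= q <oo) ((q%:R ^+ (n.-1) * psi q ^+ m)%:E) = +oo)%E.

Definition Omega (m n : nat) : set ('M[R]_(m, n) * 'cV[R]_m) :=
  [set Ag : 'M[R]_(m, n) * 'cV[R]_m | forall psi : nat -> R, @inD m n psi -> @W m n psi Ag].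

Definition S1_term (m n : nat) (A : 'M[R]_(m, n)) (g : 'cV[R]_m) (t : nat) : R :=
  t%:R ^+ (n.-1) *
  inf [set distZm (Aqg A g q) ^+ m |
         q in [set q : 'cV[int]_n | (1 <= supnormZ q <= t)%N]].

Definition S1 (m n : nat) (A : 'M[R]_(m, n)) (g : 'cV[R]_m) : \bar R :=
  (\sum_(1 <= t <oo) (S1_term A g t)%:E)%E.

End Defs.
Arguments W {R} m n psi.
Arguments inD {R} m n psi.
Arguments Omega {R} m n.

(* Main.v *)
Require Import Defs.
From HB Require Import structures.
From mathcomp Require Import all_boot all_order all_algebra.
From mathcomp Require Import all_classical all_reals all_analysis.
From mathcomp Require Import zify lra.
Import Order.TTheory GRing.Theory Num.Theory.
Local Open Scope classical_set_scope.
Local Open Scope ring_scope.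

Lemma seq_min (R : realType) (T : eqType) (f : T -> R) (s : seq T) :
  s <> [::] -> exists2 x, x \in s & forall y, y \in s -> f x <= f y.
Proof.
elim: s => [//|a s IH] _.
case: s IH => [|b s] IH.
  by exists a; rewrite ?mem_seq1 // => y; rewrite mem_seq1 => /eqP->.
have [x xs hx] := IH (fun h => ltac:(discriminate)).
have [le|lt] := leP (f a) (f x).
  exists a; first by rewrite mem_head.
  move=> y; rewrite in_cons => /orP[/eqP->//|/hx]; exact: le_trans.
exists x; first by rewrite in_cons xs orbT.
move=> y; rewrite in_cons => /orP[/eqP->|/hx//]; exact: ltW.
Qed.

Lemma fin_min (R : realType) (T : choiceType) (f : T -> R) (S : set T) :
  finite_set S -> S !=set0 -> exists2 x, S x & forall y, S y -> f x <= f y.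
Proof.
move=> /finite_fsetP[B ->] [z zB].
have [|x xs hx] := @seq_min R _ f (finmap.enum_fset B).
  by move=> E; have : z \in finmap.enum_fset B by []; rewrite E.
by exists x => // y yB; apply: hx.
Qed.

Lemma fin_bound (T : choiceType) (f : T -> nat) (S : set T) :
  finite_set S -> exists N, forall y, S y -> (f y <= N)%N.
Proof.
move=> /finite_fsetP[B ->]; exists (\max_(y <- finmap.enum_fset B) f y) => y yB.
by apply: leq_bigmax_seq.
Qed.

Lemma distZm_ge0 (R : realType) m (y : 'cV[R]_m) : 0 <= distZm y.
Proof.
rewrite /distZm; apply: lb_le_inf; first by eexists; exists 0.
move=> _ [p _ <-]; elim/big_ind: _ => //.
by move=> x z hx hz; rewrite le_max hx.
Qed.

Lemma coord_le {n} (q : 'cV[int]_n) i j : (`|q i j|%N <= supnormZ q)%N.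
Proof.
have -> : j = ord0 by apply: val_inj; case: j => [[]]. rewrite /supnormZ.
by rewrite (bigD1 i) //= leq_maxl.
Qed.

Lemma normZ0 n (q : 'cV[int]_n) : supnormZ q = 0%N -> q = 0.
Proof.
move=> h; apply/matrixP => i j; rewrite mxE.
have := coord_le q i j; rewrite h leqn0 absz_eq0 => /eqP //.
Qed.

Lemma fin_ball n t : finite_set [set q : 'cV[int]_n | (supnormZ q <= t)%N].
Proof.
apply: (@sub_finite_set _ _ ((fun k : 'M['I_(t.*2.+1)]_(n,1) =>
   \matrix_(i,j) ((k i j : nat)%:Z - t%:Z)) @` setT)); last first.
  exact/finite_image/finite_finset.
move=> q /= hq; exists (\matrix_(i,j) inord (absz (q i j + t%:Z)%R)) => //.
apply/matrixP => i j; have h := coord_le q i j; have ht := leq_trans h hq; rewrite !mxE inordK; case: (q i j) ht => k /=; rewrite ?NegzE; lia.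
Qed.

Lemma inf_attained (R : realType) (T : Type) (S : set T) (f : T -> R) x :
  S x -> (forall y, S y -> f x <= f y) -> inf [set f y | y in S] = f x.
Proof.
move=> Sx hx; apply/le_anti/andP; split.
  apply: ge_inf; last by exists x.
  by exists (f x) => _ [y Sy <-]; exact: hx.
apply: lb_le_inf; first by exists (f x), x.
by move=> _ [y Sy <-]; exact: hx.
Qed.

Lemma St_min (R : realType) m n (A : 'M[R]_(m, n)) g t : (0 < n)%N -> (1 <= t)%N ->
  exists2 q, (1 <= supnormZ q <= t)%N & forall q' : 'cV[int]_n,
    (1 <= supnormZ q' <= t)%N -> distZm (Aqg A g q) <= distZm (Aqg A g q').
Proof.
move=> n0 t1.
have [] := @fin_min R _ (fun q => distZm (Aqg A g q))
   [set q : 'cV[int]_n | (1 <= supnormZ q <= t)%N].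
- apply: sub_finite_set (fin_ball n t) => q /= /andP[] //.
- exists (const_mx 1) => /=; apply/andP; split.
    case: n A n0 => // n' A _.
    by have := coord_le (const_mx 1 : 'cV[int]_n'.+1) ord0 ord0; rewrite mxE.
  apply: leq_trans t1; rewrite /supnormZ; apply/bigmax_leqP => i _.
  by rewrite mxE.
- by move=> q hq hm; exists q.
Qed.

Lemma inf_ge0 (R : realType) (E : set R) : (forall x, E x -> 0 <= x) -> 0 <= inf E.
Proof.
move=> h; have [->|ne] := eqVneq E set0; first by rewrite inf0.
by apply: lb_le_inf => //; apply/set0P.
Qed.

Lemma St0 n : [set q : 'cV[int]_n | (1 <= supnormZ q <= 0)%N] = set0.
Proof. by apply/seteqP; split => q //= /andP[h1 h2]; have := leq_trans h1 h2. Qed.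

Lemma S1_term_ge0 (R : realType) m n (A : 'M[R]_(m, n)) g t : 0 <= S1_term A g t.
Proof.
rewrite /S1_term mulr_ge0 ?exprn_ge0 ?ler0n //.
apply: inf_ge0 => _ [q _ <-]; exact/exprn_ge0/distZm_ge0.
Qed.

Lemma S1_term_ge (R : realType) m n (A : 'M[R]_(m, n)) g t b : (0 < n)%N -> (1 <= t)%N ->
  0 <= b -> (forall q : 'cV[int]_n, (1 <= supnormZ q <= t)%N -> b <= distZm (Aqg A g q)) ->
  t%:R ^+ n.-1 * b ^+ m <= S1_term A g t.
Proof.
move=> n0 t1 b0 hb; have [q hq hmin] := St_min _ _ _ A g t n0 t1.
rewrite /S1_term (@inf_attained _ _ _ (fun q => distZm (Aqg A g q) ^+ m) q) //.
  rewrite ler_wpM2l ?exprn_ge0 ?ler0n //.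
  by rewrite lerXn2r // ?nnegrE ?distZm_ge0 // hb.
move=> y hy; rewrite lerXn2r // ?nnegrE ?distZm_ge0 //; exact: hmin.
Qed.

Lemma dir1 (R : realType) (m n : nat) (A : 'M[R]_(m, n)) (g : 'cV[R]_m) :
  (0 < m)%N -> (0 < n)%N ->
  Omega m n (A, g) -> (S1 A g < +oo)%E.
Proof.
move=> m0 n0 hO; rewrite ltNge; apply/negP => hS.
pose psi t := inf [set distZm (Aqg A g q) | q in [set q : 'cV[int]_n | (1 <= supnormZ q <= t)%N]].
have psiE t : (1 <= t)%N -> exists2 q, (1 <= supnormZ q <= t)%N &
   (psi t = distZm (Aqg A g q) /\ forall q' : 'cV[int]_n,
    (1 <= supnormZ q' <= t)%N -> distZm (Aqg A g q) <= distZm (Aqg A g q')).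
  move=> t1; have [q hq hmin] := St_min _ _ _ A g t n0 t1.
  exists q => //; split => //.
  by rewrite /psi (@inf_attained _ _ _ (fun q => distZm (Aqg A g q)) q).
have hD : inD m n psi.
  split; first by move=> t; apply: inf_ge0 => _ [q _ <-]; exact: distZm_ge0.
  split.
    move=> a b a1 ab.
    have [qa ha [-> _]] := psiE a a1.
    have [qb hb [-> hmb]] := psiE b (leq_trans a1 ab).
    apply: hmb; case/andP: ha => h1 h2; by rewrite h1 (leq_trans h2 ab).
  apply/eqP; rewrite -leye_eq; apply: (le_trans hS); rewrite /S1 le_eqVlt; apply/orP; left.
  apply/eqP; apply: eq_eseriesr => -[|t] _.
    rewrite /S1_term /psi !St0 !image_set0 inf0.
    have -> : (0:R) ^+ m = 0 by rewrite expr0n gtn_eqF.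
    by [].
  have [q hq [hpsi hmin]] := psiE t.+1 erefl.
  rewrite /S1_term hpsi (@inf_attained _ _ _ (fun q => distZm (Aqg A g q) ^+ m) q) //.
  move=> y hy; rewrite lerXn2r // ?nnegrE ?distZm_ge0 //; exact: hmin.
apply: (hO psi hD).
apply: (@sub_finite_set _ _ [set 0]); last exact: finite_set1.
move=> q /= hq; case E: (supnormZ q) hq => [|t] hq; first exact: normZ0.
have [q' hq' [hpsi hmin]] := psiE t.+1 erefl.
exfalso; move: hq; rewrite hpsi ltNge => /negP; apply; apply: hmin.
by rewrite E leqnn.
Qed.

Lemma dir2 (R : realType) (m n : nat) (A : 'M[R]_(m, n)) (g : 'cV[R]_m) :
  (0 < m)%N -> (0 < n)%N ->
  (forall q : 'cV[int]_n, q != 0 -> 0 < distZm (Aqg A g q)) ->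
  (S1 A g < +oo)%E -> Omega m n (A, g).
Proof.
move=> m0 n0 hpos hS psi [h0 [hdec hsum]] /= hfin.
have [T0 hT0] := fin_bound _ (@supnormZ n) _ hfin.
pose T := maxn T0 1.
have T1 : (1 <= T)%N by rewrite leq_maxr.
have [qc hqc hmin] := St_min _ _ _ A g T n0 T1.
set c := distZm (Aqg A g qc).
have c0 : 0 < c.
  apply: hpos; apply/eqP => qc0; move: hqc; rewrite qc0.
  suff -> : supnormZ (0 : 'cV[int]_n) = 0%N by [].
  by apply/eqP; rewrite -leqn0; apply/bigmax_leqP => i _; rewrite mxE.
have key : forall q : 'cV[int]_n, (T < supnormZ q)%N ->
    psi (supnormZ q) <= distZm (Aqg A g q).
  move=> q hq; rewrite leNgt; apply/negP => hlt.
  have := hT0 q hlt; move: hq; rewrite /T; lia.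
have L : forall t q, (1 <= supnormZ q <= t)%N ->
    (c <= distZm (Aqg A g q)) \/ (psi t <= distZm (Aqg A g q)).
  move=> t q /andP[q1 qt]; have [qT|Tq] := leqP (supnormZ q) T.
    by left; apply: hmin; rewrite q1.
  right; apply: le_trans (key q Tq); apply: hdec => //.
have [[t0 /andP[t01 ht0]]|nex] := pselect (exists t0, (1 <= t0)%N && (psi t0 <= c)).
  pose u t := t%:R ^+ n.-1 * psi t ^+ m.
  have u0 t : 0 <= u t by rewrite /u mulr_ge0 ?exprn_ge0 ?ler0n.
  have hpt t : ((u t)%:E <= (S1_term A g t)%:E + (if (t < t0)%N then u t else 0)%:E)%E.
    case: ltnP => tt0.
      by rewrite -[X in (X <= _)%E]add0e leeD2r // lee_fin (S1_term_ge0 _ _ _ A g).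
    rewrite adde0 lee_fin; apply: (S1_term_ge _ _ _ A g t _ n0 (leq_trans t01 tt0) (h0 t)).
    move=> q hq; case: (L t q hq) => // hc.
    apply: le_trans hc; apply: le_trans ht0; apply: hdec => //.
  have : (\sum_(1 <= q <oo) ((q%:R ^+ (n.-1) * psi q ^+ m)%:E) < +oo)%E.
    apply: (le_lt_trans (lee_nneseries _ (fun t _ => hpt t))); first by move=> i _ _; rewrite lee_fin.
    rewrite nneseriesD; last 2 first.
    - by move=> i _ _; rewrite lee_fin (S1_term_ge0 _ _ _ A g).
    - by move=> i _ _; rewrite lee_fin; case: ifP.
    apply: lte_add_pinfty => //.
    rewrite (nneseries_split _ t0); last by move=> k _; rewrite lee_fin; case: ifP.
    rewrite eseries0; last by move=> i hi _; rewrite ltnNge (leq_trans (leq_addl _ _) hi).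
    by rewrite adde0 sumEFin ltry.
  by rewrite hsum.
have cpsi t : (1 <= t)%N -> c < psi t.
  move=> t1; rewrite ltNge; apply/negP => h; apply: nex; exists t; by rewrite t1 h.
have hterm t : (1 <= t)%N -> c ^+ m <= S1_term A g t.
  move=> t1; apply: le_trans (S1_term_ge _ _ _ A g t _ n0 t1 (ltW c0) _).
    by rewrite ler_peMl ?exprn_ge0 ?(ltW c0) // exprn_ege1 // ler1n.
  move=> q hq; case: (L t q hq) => // hc.
  exact: le_trans (ltW (cpsi t t1)) hc.
have S0 : (0 <= S1 A g)%E by apply: nneseries_ge0 => i _ _; rewrite lee_fin (S1_term_ge0 _ _ _ A g).
have [r hr] : exists r, S1 A g = r%:E.
  by exists (fine (S1 A g)); rewrite fineK // ge0_fin_numE.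
have cm0 : 0 < c ^+ m by rewrite exprn_gt0.
pose N := (Num.truncn (r / c ^+ m)).+1.
have := @nneseries_lim_ge R (fun t => (S1_term A g t)%:E) xpredT 1%N N.+1
   (fun i _ _ => S1_term_ge0 _ _ _ A g i).
rewrite -/(S1 A g) hr sumEFin lee_fin => hle.
have : c ^+ m *+ N <= r.
  apply: le_trans hle.
  have -> : c ^+ m *+ N = \sum_(1 <= i < N.+1) c ^+ m.
    by rewrite sumr_const_nat subn1.
  rewrite big_nat [X in _ <= X]big_nat; apply: ler_sum => i /andP[i1 _]; exact: hterm.
have := truncnS_gt (r / c ^+ m).
rewrite -/N ltr_pdivrMr // => h1 h2.
move: h2; rewrite -mulr_natl => h2; have := lt_le_trans h1 h2; by rewrite ltxx.
Qed.

Theorem corollary2p1 (R : realType) (m n : nat) (A : 'M[R]_(m, n)) (g : 'cV[R]_m) :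
  (0 < m)%N -> (0 < n)%N ->
  (forall i j, 0 <= A i j < 1) -> (forall i, 0 <= g i ord0 < 1) ->
  (forall q : 'cV[int]_n, q != 0 -> 0 < distZm (Aqg A g q)) ->
  (Omega m n (A, g) <-> (S1 A g < +oo)%E).
Proof.
move=> m0 n0 _ _ hpos; split; first exact: (@dir1 R m n A g m0 n0).
exact: (@dir2 R m n A g m0 n0 hpos).
Qed.
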